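(* Let $\mathbb{K}$ be an algebraically closed field of characteristic zero and let $X$ be an irreducible affine variety with $X\cong Y\times\mathbb{A}^1$, where $Y$ is an affine variety admitting a nonzero locally nilpotent derivation of $\mathbb{K}[Y]$. Suppose that $\mathrm{HD}^*(X)\neq\mathbb{K}[X]$. Then $\mathrm{HD}^*(X)$ is not a finitely generated $\mathbb{K}$-algebra.
   Context: A derivation $\partial$ of $\mathbb{K}[X]$ is locally nilpotent (LND) if for every $a\in\mathbb{K}[X]$ there is $n$ with $\partial^n(a)=0$. An element $s\in\mathbb{K}[X]$ is a slice of an LND $\partial$ if $\partial(s)=1$. Let $\mathrm{LND}^*(X)$ be the set of LNDs of $\mathbb{K}[X]$ admitting a slice. The modified Derksen invariant $\mathrm{HD}^*(X)$ is the $\mathbb{K}$-subalgebra of $\mathbb{K}[X]$ generated by the kernels $\ker\partial$ for all $\partial\in\mathrm{LND}^*(X)$. *)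

(* Defs.v *)
From HB Require Import structures.
From mathcomp Require Import all_boot all_order all_algebra.
Set Implicit Arguments. Unset Strict Implicit. Unset Printing Implicit Defensive.
Import GRing.Theory.
Local Open Scope ring_scope.

(* Coordinate rings are modelled as commutative K-algebras. *)
Section Defs.
Variables (K : fieldType) (A : comAlgType K).

Definition is_derivation (d : A -> A) : Prop :=
  [/\ forall x y, d (x + y) = d x + d y,
      forall (k : K) x, d (k *: x) = k *: d x
    & forall x y, d (x * y) = x * d y + d x * y].

Definition is_LND (d : A -> A) : Prop :=
  is_derivation d /\ forall a, exists n : nat, iter n d a = 0.

Definition is_slice (d : A -> A) (s : A) : Prop := d s = 1.

Definition LND_star (d : A -> A) : Prop := is_LND d /\ exists s, is_slice d s.

Definition is_subalgebra (P : A -> Prop) : Prop :=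
  [/\ P 1, forall x y, P x -> P y -> P (x + y),
      forall x y, P x -> P y -> P (x * y)
    & forall (k : K) x, P x -> P (k *: x)].

Definition gen_subalg (S : A -> Prop) (a : A) : Prop :=
  forall P, is_subalgebra P -> (forall x, S x -> P x) -> P a.

Definition HD_star (a : A) : Prop :=
  gen_subalg (fun x => exists d, LND_star d /\ d x = 0) a.

Definition fin_gen_subalg (H : A -> Prop) : Prop :=
  exists gs : seq A, (forall g, g \in gs -> H g) /\
    (forall a, H a <-> gen_subalg (fun x => x \in gs) a).

Definition fin_gen_algebra : Prop := fin_gen_subalg (fun _ => True).

Definition is_reduced : Prop := forall (x : A) (n : nat), x ^+ n = 0 -> x = 0.

Definition is_domain : Prop := forall x y : A, x * y = 0 -> x = 0 \/ y = 0.
End Defs.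

Definition poly_alg_iso (K : fieldType) (B A : comAlgType K)
    (phi : {poly B} -> A) : Prop :=
  [/\ forall p q, phi (p + q) = phi p + phi q,
      forall p q, phi (p * q) = phi p * phi q,
      phi 1 = 1,
      forall k : K, phi ((k%:A)%:P) = k%:A
    & bijective phi].

(* Main.v *)
Require Import Defs.
From HB Require Import structures.
From mathcomp Require Import all_boot all_order all_algebra.
From Stdlib Require Import Classical ClassicalEpsilon.
From mathcomp Require Import zify ring.
Set Implicit Arguments. Unset Strict Implicit. Unset Printing Implicit Defensive.
Import GRing.Theory.
Local Open Scope ring_scope.

Section Gen.
Variables (K : fieldType) (A : comAlgType K).

Lemma subalg0 (P : A -> Prop) : is_subalgebra P -> P 0.
Proof. by case=> H1 _ _ HZ; rewrite -(scale0r (1 : A)); apply: HZ. Qed.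

Lemma subalgN (P : A -> Prop) x : is_subalgebra P -> P x -> P (- x).
Proof. by case=> _ _ _ HZ Hx; rewrite -scaleN1r; apply: HZ. Qed.

Lemma subalgD (P : A -> Prop) x y : is_subalgebra P -> P x -> P y -> P (x + y).
Proof. by case=> _ HD _ _; apply: HD. Qed.

Lemma subalgB (P : A -> Prop) x y : is_subalgebra P -> P x -> P y -> P (x - y).
Proof. by move=> HP Hx Hy; apply: subalgD => //; apply: subalgN. Qed.

Lemma subalgM (P : A -> Prop) x y : is_subalgebra P -> P x -> P y -> P (x * y).
Proof. by case=> _ _ HM _; apply: HM. Qed.

Lemma subalgZ (P : A -> Prop) k x : is_subalgebra P -> P x -> P (k *: x).
Proof. by case=> _ _ _ HZ; apply: HZ. Qed.

Lemma subalg1 (P : A -> Prop) : is_subalgebra P -> P 1.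
Proof. by case. Qed.

Lemma subalg_sum (P : A -> Prop) (I : Type) (r : seq I) (F : I -> A) :
  is_subalgebra P -> (forall i, P (F i)) -> P (\sum_(i <- r) F i).
Proof.
move=> HP HF; elim: r => [|a r IH]; first by rewrite big_nil; apply: subalg0.
by rewrite big_cons; apply: subalgD.
Qed.

Lemma gen_subalgP (S : A -> Prop) : is_subalgebra (gen_subalg S).
Proof.
split.
- by move=> P HP _; apply: subalg1.
- by move=> x y Hx Hy P HP HS; apply: subalgD => //; [apply: Hx|apply: Hy].
- by move=> x y Hx Hy P HP HS; apply: subalgM => //; [apply: Hx|apply: Hy].
- by move=> k x Hx P HP HS; apply: subalgZ => //; apply: Hx.
Qed.

Lemma gen_subalg_in (S : A -> Prop) x : S x -> gen_subalg S x.
Proof. by move=> Hx P _ HS; apply: HS. Qed.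

Lemma HD_subalg : is_subalgebra (@HD_star K A).
Proof. exact: gen_subalgP. Qed.

Lemma HD_ker (d : A -> A) x : LND_star d -> d x = 0 -> HD_star x.
Proof. by move=> Hd Hx; apply: gen_subalg_in; exists d. Qed.

Lemma HD_auto (al be : A -> A) :
  (forall x y, al (x + y) = al x + al y) ->
  (forall x y, al (x * y) = al x * al y) -> al 1 = 1 ->
  (forall k x, al (k *: x) = k *: al x) ->
  cancel al be -> cancel be al ->
  forall a, HD_star a -> HD_star (al a).
Proof.
move=> alD alM al1 alZ alK beK.
have be0 : forall x y, be (x + y) = be x + be y.
  by move=> x y; apply: (can_inj alK); rewrite alD !beK.
have beM : forall x y, be (x * y) = be x * be y.
  by move=> x y; apply: (can_inj alK); rewrite alM !beK.
have beZ : forall k x, be (k *: x) = k *: be x.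
  by move=> k x; apply: (can_inj alK); rewrite alZ !beK.
have al0 : al 0 = 0.
  by apply: (@addrI _ (al 0)); rewrite -alD !addr0.
move=> a Ha P HP HS.
pose P' := fun x => P (al x).
have HP' : is_subalgebra P'.
  split; rewrite /P'.
  - by rewrite al1; apply: subalg1.
  - by move=> x y Hx Hy; rewrite alD; apply: subalgD.
  - by move=> x y Hx Hy; rewrite alM; apply: subalgM.
  - by move=> k x Hx; rewrite alZ; apply: subalgZ.
apply: (Ha P' HP') => x [d [[[[dD dZ dM] dN] [s Hs]] Hdx]].
rewrite /P'; apply: HS.
exists (fun y => al (d (be y))); split; last by rewrite alK Hdx.
split; last by exists (al s); rewrite /is_slice alK Hs al1.
split.
- split.
  + by move=> y z; rewrite be0 dD alD.
  + by move=> k y; rewrite beZ dZ alZ.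
  + by move=> y z; rewrite beM dM alD !alM !beK.
- move=> y; have [n Hn] := dN (be y); exists n.
  have -> : forall m, iter m (fun y0 => al (d (be y0))) y = al (iter m d (be y)).
    by elim=> [|m IH] /=; [rewrite beK | rewrite IH alK].
  by rewrite Hn.
Qed.

End Gen.

Section Noeth.
Variables (K : fieldType) (A : comAlgType K).

Definition noeth (P : A -> Prop) := forall x : nat -> A, (forall k, P (x k)) ->
  exists n (eta : nat -> A), (forall k, P (eta k)) /\ x n = \sum_(k < n) eta k * x k.

Variables (P : A -> Prop) (HP : is_subalgebra P).
Hypothesis NP : noeth P.

Definition Rp (p : {poly A}) := forall j, P p`_j.

Lemma Rp0 : Rp 0. Proof. by move=> j; rewrite coef0; apply: subalg0. Qed.
Lemma RpD p q : Rp p -> Rp q -> Rp (p + q).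
Proof. by move=> Hp Hq j; rewrite coefD; apply: subalgD. Qed.
Lemma RpN p : Rp p -> Rp (- p).
Proof. by move=> Hp j; rewrite coefN; apply: subalgN. Qed.
Lemma RpB p q : Rp p -> Rp q -> Rp (p - q).
Proof. by move=> Hp Hq; apply: RpD => //; apply: RpN. Qed.
Lemma Rp_sum (I : Type) (r : seq I) (F : I -> {poly A}) :
  (forall i, Rp (F i)) -> Rp (\sum_(i <- r) F i).
Proof.
move=> HF; elim: r => [|a r IH]; first by rewrite big_nil; apply: Rp0.
by rewrite big_cons; apply: RpD.
Qed.
Lemma RpM p q : Rp p -> Rp q -> Rp (p * q).
Proof.
move=> Hp Hq j; rewrite coefM; apply: subalg_sum => // i.
by apply: subalgM.
Qed.
Lemma RpC c : P c -> Rp c%:P.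
Proof. by move=> Hc j; rewrite coefC; case: eqP => _ //; apply: subalg0. Qed.
Lemma Pnat (b : bool) : P b%:R.
Proof. by case: b; [apply: subalg1 | apply: subalg0]. Qed.
Lemma RpX : Rp 'X.
Proof. by move=> j; rewrite coefX; apply: Pnat. Qed.
Lemma RpXn n : Rp 'X^n.
Proof. by move=> j; rewrite coefXn; apply: Pnat. Qed.
Lemma Rp1 : Rp 1.
Proof. by rewrite -polyC1; apply: RpC; apply: subalg1. Qed.

Definition adj (g : A) (a : A) := exists p : {poly A}, Rp p /\ a = p.[g].

Lemma adj_subalg g : is_subalgebra (adj g).
Proof.
split.
- by exists 1; split; [apply: Rp1 | rewrite hornerC].
- move=> x y [p [Hp ->]] [q [Hq ->]]; exists (p + q); split; first by apply: RpD.
  by rewrite hornerD.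
- move=> x y [p [Hp ->]] [q [Hq ->]]; exists (p * q); split; first by apply: RpM.
  by rewrite hornerM.
- move=> k x [p [Hp ->]]; exists (k%:A *: p); split.
    by move=> j; rewrite coefZ mulr_algl; apply: subalgZ.
  by rewrite hornerZ mulr_algl.
Qed.

Lemma adj_P g x : P x -> adj g x.
Proof. by move=> Hx; exists x%:P; split; [apply: RpC | rewrite hornerC]. Qed.

Lemma adj_g g : adj g g.
Proof. by exists 'X; split; [apply: RpX | rewrite hornerX]. Qed.

Lemma adj_sub g (Q : A -> Prop) : is_subalgebra Q -> (forall x, P x -> Q x) -> Q g ->
  forall x, adj g x -> Q x.
Proof.
move=> HQ HPQ Hg x [p [Hp ->]]; rewrite horner_coef; apply: subalg_sum => // i.
apply: subalgM => //; first by apply: HPQ.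
elim: (nat_of_ord i) => [|m IH]; first by rewrite expr0; apply: subalg1.
by rewrite exprS; apply: subalgM.
Qed.

Definition pspan (F : seq {poly A}) (q : {poly A}) :=
  forall Q : {poly A} -> Prop, Q 0 -> (forall x y, Q x -> Q y -> Q (x + y)) ->
    (forall r x, Rp r -> Q x -> Q (r * x)) -> (forall x, x \in F -> Q x) -> Q q.

Lemma pspan0 F : pspan F 0. Proof. by move=> Q. Qed.
Lemma pspanD F x y : pspan F x -> pspan F y -> pspan F (x + y).
Proof. by move=> Hx Hy Q H0 HD HM HF; apply HD; [apply: (Hx Q) | apply: (Hy Q)]. Qed.
Lemma pspanM F r x : Rp r -> pspan F x -> pspan F (r * x).
Proof. by move=> Hr Hx Q H0 HD HM HF; apply HM => //; apply: (Hx Q). Qed.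
Lemma pspan_mem F x : x \in F -> pspan F x.
Proof. by move=> Hx Q H0 HD HM HF; apply: HF. Qed.
Lemma pspanN F x : pspan F x -> pspan F (- x).
Proof. by move=> Hx; rewrite -mulN1r; apply: pspanM => //; apply: RpN; apply: Rp1. Qed.
Lemma pspanB F x y : pspan F x -> pspan F y -> pspan F (x - y).
Proof. by move=> Hx Hy; apply: pspanD => //; apply: pspanN. Qed.
Lemma pspan_sum F (I : Type) (r : seq I) (G : I -> {poly A}) :
  (forall i, pspan F (G i)) -> pspan F (\sum_(i <- r) G i).
Proof.
move=> HG; elim: r => [|a r IH]; first by rewrite big_nil; apply: pspan0.
by rewrite big_cons; apply: pspanD.
Qed.
Lemma pspan_trans F G q : (forall x, x \in F -> pspan G x) -> pspan F q -> pspan G q.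
Proof.
move=> HFG Hq; apply: (Hq (pspan G)) => //; [move=> x y; exact: pspanD | move=> r x; exact: pspanM | idtac ..].
Qed.
Lemma pspan_sub F G q : {subset F <= G} -> pspan F q -> pspan G q.
Proof. by move=> FG; apply: pspan_trans => x Hx; apply: pspan_mem; apply: FG. Qed.
Lemma pspan_Rp F q : (forall x, x \in F -> Rp x) -> pspan F q -> Rp q.
Proof. by move=> HF Hq; apply: (Hq Rp) => //; [exact: Rp0 | move=> x y; exact: RpD | move=> r x; exact: RpM | idtac ..]. Qed.

Definition Eset (F : seq {poly A}) (q : {poly A}) := exists eta : nat -> {poly A},
  (forall k, Rp (eta k)) /\ q = \sum_(k < size F) eta k * F`_k.

Lemma pspan_Eset F q : pspan F q -> Eset F q.
Proof.
move=> Hq; apply: (Hq (Eset F)).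
- exists (fun _ => 0); split; first by move=> _; apply: Rp0.
  by rewrite big1 // => i _; rewrite mul0r.
- move=> x y [e1 [He1 ->]] [e2 [He2 ->]]; exists (fun k => e1 k + e2 k); split.
    by move=> k; apply: RpD.
  by rewrite -big_split /=; apply: eq_bigr => i _; rewrite mulrDl.
- move=> r x Hr [e [He ->]]; exists (fun k => r * e k); split.
    by move=> k; apply: RpM.
  by rewrite mulr_sumr; apply: eq_bigr => i _; rewrite mulrA.
- move=> x Hx; exists (fun k => if k == index x F then 1 else 0); split.
    by move=> k; case: eqP => _; [apply: Rp1 | apply: Rp0].
  have Hi : (index x F < size F)%N by rewrite index_mem.
  rewrite (bigD1 (Ordinal Hi)) //= eqxx mul1r nth_index // big1 ?addr0 //.
  move=> i /eqP Hne; case: eqP => Heq; last by rewrite mul0r.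
  by exfalso; apply: Hne; apply: val_inj.
Qed.

Lemma mem_mkseqP (T : eqType) (f : nat -> T) n x :
  x \in mkseq f n -> exists2 i, (i < n)%N & x = f i.
Proof. by case/mapP=> i; rewrite mem_iota add0n => /andP [_ Hi] ->; exists i. Qed.

Lemma mkseq_mem (T : eqType) (f : nat -> T) n i : (i < n)%N -> f i \in mkseq f n.
Proof. by move=> Hi; apply: map_f; rewrite mem_iota add0n. Qed.

Lemma mkseq_subset (T : eqType) (f : nat -> T) m n : (m <= n)%N ->
  {subset mkseq f m <= mkseq f n}.
Proof.
by move=> Hmn x /mem_mkseqP [i Hi ->]; apply: mkseq_mem; apply: leq_trans Hmn.
Qed.

Lemma exists_min (Q : {poly A} -> Prop) : (exists q, Q q) ->
  exists q, Q q /\ forall q', Q q' -> (size q <= size q')%N.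
Proof.
move=> [q0 Hq0].
suff: forall s (q : {poly A}), (size q <= s)%N -> Q q ->
  exists q, Q q /\ forall q', Q q' -> (size q <= size q')%N.
  by move=> H; apply: (H (size q0) q0).
elim=> [|s IH] q Hs Hq.
  by exists q; split => // q' _; apply: leq_trans Hs _.
case: (classic (exists q', Q q' /\ (size q' < size q)%N)).
  move=> [q' [Hq' Hlt]]; apply: (IH q') => //.
  by rewrite -ltnS; apply: leq_trans Hlt Hs.
move=> Hno; exists q; split => // q' Hq'.
by rewrite leqNgt; apply/negP => Hlt; apply: Hno; exists q'.
Qed.

Section Hilb.
Variable f : nat -> {poly A}.
Hypothesis Hf : forall k, Rp (f k).
Hypothesis Hbad : forall n, ~ Eset (mkseq f n) (f n).

Definition Iset q := exists m, pspan (mkseq f m) q.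

Lemma Iset_Rp q : Iset q -> Rp q.
Proof. by move=> [m Hm]; apply: (pspan_Rp _ Hm) => x /mem_mkseqP [i _ ->]. Qed.

Lemma Iset_mono m n q : (m <= n)%N -> pspan (mkseq f m) q -> pspan (mkseq f n) q.
Proof. by move=> Hmn; apply: pspan_sub; apply: mkseq_subset. Qed.

Lemma IsetD x y : Iset x -> Iset y -> Iset (x + y).
Proof.
move=> [m Hm] [n Hn]; exists (maxn m n); apply: pspanD.
  by apply: (Iset_mono (leq_maxl m n)).
by apply: (Iset_mono (leq_maxr m n)).
Qed.
Lemma IsetM r x : Rp r -> Iset x -> Iset (r * x).
Proof. by move=> Hr [m Hm]; exists m; apply: pspanM. Qed.
Lemma IsetN x : Iset x -> Iset (- x).
Proof. by move=> [m Hm]; exists m; apply: pspanN. Qed.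
Lemma IsetB x y : Iset x -> Iset y -> Iset (x - y).
Proof. by move=> Hx Hy; apply: IsetD => //; apply: IsetN. Qed.
Lemma Iset_sum (I : Type) (r : seq I) (G : I -> {poly A}) :
  (forall i, Iset (G i)) -> Iset (\sum_(i <- r) G i).
Proof.
move=> HG; elim: r => [|a r IH]; first by rewrite big_nil; exists 0%N; apply: pspan0.
by rewrite big_cons; apply: IsetD.
Qed.

Lemma exists_out F : (forall x, x \in F -> Iset x) -> exists q, Iset q /\ ~ pspan F q.
Proof.
move=> HF.
have [M HM] : exists M, forall x, x \in F -> pspan (mkseq f M) x.
  elim: F HF => [|a F IH] HF; first by exists 0%N.
  have [M1 HM1] : exists M, pspan (mkseq f M) a by apply: HF; rewrite inE eqxx.
  have [M2 HM2] := IH (fun x Hx => HF x (@mem_behead _ (a :: F) x Hx)).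
  exists (maxn M1 M2) => x; rewrite inE => /orP [/eqP ->|Hx].
    by apply: (Iset_mono (leq_maxl M1 M2)).
  by apply: (Iset_mono (leq_maxr M1 M2)); apply: HM2.
exists (f M); split.
  by exists M.+1; apply: pspan_mem; apply: mkseq_mem.
move=> Hsp; exact: (Hbad (pspan_Eset (pspan_trans HM Hsp))).
Qed.

Definition minspec (F : seq {poly A}) q :=
  Iset q /\ ~ pspan F q /\ forall q', Iset q' -> ~ pspan F q' -> (size q <= size q')%N.

Definition pick (F : seq {poly A}) : {poly A} := epsilon (inhabits 0) (minspec F).

Lemma pickP F : (forall x, x \in F -> Iset x) -> minspec F (pick F).
Proof.
move=> HF; apply: epsilon_spec.
have [q0 [Hq0 Hn0]] := exists_out HF.
have [q [[Hq Hnq] Hmin]] := exists_min (Q := fun q => Iset q /\ ~ pspan F q)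
  (ex_intro _ q0 (conj Hq0 Hn0)).
by exists q; split; [|split] => // q' H1 H2; apply: Hmin.
Qed.

Fixpoint flist n : seq {poly A} :=
  if n is n'.+1 then rcons (flist n') (pick (flist n')) else [::].

Definition gseq k := pick (flist k).

Lemma flistE n : flist n = mkseq gseq n.
Proof. by elim: n => [|n IH] //=; rewrite mkseqS -IH. Qed.

Lemma gseqP n : minspec (flist n) (gseq n).
Proof.
suff : (forall x, x \in flist n -> Iset x) by move=> H; apply: pickP.
elim: n => [|n IH] x //=.
rewrite mem_rcons inE => /orP [/eqP ->|Hx]; last by apply: IH.
by case: (pickP IH).
Qed.

Lemma gseq_neq0 n : gseq n != 0.
Proof.
by apply/eqP => H; case: (gseqP n) => _ [Hn _]; apply: Hn; rewrite H; apply: pspan0.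
Qed.

Lemma gseq_size k n : (k < n)%N -> (size (gseq k) <= size (gseq n))%N.
Proof.
move=> Hkn; case: (gseqP k) => _ [_ Hmin]; apply: Hmin; first by case: (gseqP n).
move=> Hsp; case: (gseqP n) => _ [Hn _]; apply: Hn.
rewrite !flistE in Hsp *; apply: (pspan_sub _ Hsp); exact: mkseq_subset (ltnW Hkn).
Qed.

Lemma hilb_false : False.
Proof.
pose lc k := lead_coef (gseq k).
have Hlc : forall k, P (lc k).
  by move=> k; rewrite /lc lead_coefE; apply: Iset_Rp; case: (gseqP k).
have [n [r [Hr Hn]]] := NP Hlc.
pose s := size (gseq n).
pose h := gseq n - \sum_(k < n) ((r k)%:P * 'X^(s - size (gseq k))) * gseq k.
have Hs0 : (0 < s)%N by rewrite size_poly_gt0 gseq_neq0.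
have Hsk : forall k, (0 < size (gseq k))%N by move=> k; rewrite size_poly_gt0 gseq_neq0.
have Hh : Iset h.
  apply: IsetB; first by case: (gseqP n).
  apply: Iset_sum => k; apply: IsetM; first by apply: RpM; [apply: RpC|apply: RpXn].
  by case: (gseqP k).
have Hnh : ~ pspan (flist n) h.
  move=> Hsp; case: (gseqP n) => _ [Hn' _]; apply: Hn'.
  have -> : gseq n = h + \sum_(k < n) ((r k)%:P * 'X^(s - size (gseq k))) * gseq k.
    by rewrite /h subrK.
  apply: pspanD => //; apply: pspan_sum => k; apply: pspanM.
    by apply: RpM; [apply: RpC|apply: RpXn].
  by apply: pspan_mem; rewrite flistE; apply: mkseq_mem.
have Hsize : (size h <= s.-1)%N.
  apply/leq_sizeP => j Hj.
  rewrite /h coefB coef_sum.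
  have Hterm : forall k : 'I_n, (((r k)%:P * 'X^(s - size (gseq k))) * gseq k)`_j =
      if j == s.-1 then r k * lc k else 0.
    move=> k; rewrite -mulrA coefCM coefXnM.
    have Hk := gseq_size (ltn_ord k); have Hk0 := Hsk k.
    have -> : (j < s - size (gseq k))%N = false.
      by apply/negbTE; rewrite -leqNgt; apply: leq_trans Hj; rewrite /s; case: (size (gseq n)) Hs0 Hk => // m _ Hk'; rewrite /=; rewrite leq_subLR; move: Hk0 Hk'; case: (size (gseq k)) => // z _ _; rewrite addSn ltnS leq_addl.
    case: eqP => Hjs.
      rewrite /lc lead_coefE; congr (_ * _); congr (_`_ _).
      rewrite Hjs /s; move: Hk Hk0 Hs0; rewrite /s.
      case: (size (gseq n)) => // a; case: (size (gseq k)) => // b /= Hab _ _.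
      by rewrite subSS subKn.
    have Hj' : (size (gseq k) <= j - (s - size (gseq k)))%N.
      move: Hj Hjs Hk Hk0 Hs0; rewrite /s.
      case: (size (gseq n)) => // a; case: (size (gseq k)) => // b /= Hja Hjs Hab _ _.
      have Hja' : (a < j)%N by rewrite ltn_neqAle Hja andbT; apply/eqP => E; apply: Hjs; rewrite E.
      by rewrite subSS leq_subRL ?leq_subLR; lia.
    by rewrite (leq_sizeP _ _ (leqnn _) _ Hj') mulr0.
  rewrite (eq_bigr _ (fun k _ => Hterm k)).
  case: eqP => Hjs.
    by rewrite Hjs /s -lead_coefE -/(lc n) Hn subrr.
  rewrite big1 // subr0; apply: (leq_sizeP _ _ (leqnn _)).
  move: Hj Hs0 Hjs; rewrite /s; case: (size (gseq n)) => // a /= Ha _ Hne.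
  by rewrite ltn_neqAle Ha andbT; apply/eqP => E; apply: Hne; rewrite E.
case: (gseqP n) => _ [_ Hmin].
have := Hmin h Hh Hnh; rewrite -/s => Hle.
have := leq_trans Hle Hsize.
by move: Hs0; rewrite /s; case: (size (gseq n)) => // m _; rewrite /= ltnn.
Qed.

End Hilb.

Lemma poly_noeth (f : nat -> {poly A}) : (forall k, Rp (f k)) ->
  exists n (eta : nat -> {poly A}), (forall k, Rp (eta k)) /\
    f n = \sum_(k < n) eta k * f k.
Proof.
move=> Hf; apply: NNPP => Hno.
apply: (@hilb_false f Hf) => n [eta [He Hn]]; apply: Hno; exists n, eta; split => //.
rewrite Hn size_mkseq; apply: eq_bigr => i _; by rewrite nth_mkseq.
Qed.

Lemma adj_noeth g : noeth (adj g).
Proof.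
move=> x Hx.
pose p k := epsilon (inhabits 0) (fun p => Rp p /\ x k = p.[g]).
have Hp : forall k, Rp (p k) /\ x k = (p k).[g].
  by move=> k; apply: (epsilon_spec (inhabits 0) (fun p => Rp p /\ x k = p.[g])); apply: Hx.
have [n [eta [He Hn]]] := poly_noeth (fun k => (Hp k).1).
exists n, (fun k => (eta k).[g]); split.
  by move=> k; exists (eta k).
rewrite (Hp n).2 Hn horner_sum; apply: eq_bigr => i _.
by rewrite hornerM -(Hp i).2.
Qed.

End Noeth.

Section Chain.
Variables (K : fieldType) (A : comAlgType K).

Definition Kline (a : A) := exists k : K, a = k%:A.

Lemma Kline_subalg : is_subalgebra Kline.
Proof.
split.
- by exists 1; rewrite scale1r.
- by move=> x y [a ->] [b ->]; exists (a + b); rewrite scalerDl.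
- by move=> x y [a ->] [b ->]; exists (a * b); rewrite mulr_algl scalerA.
- by move=> k x [a ->]; exists (k * a); rewrite scalerA.
Qed.

Lemma Kline_noeth : noeth Kline.
Proof.
move=> x Hx.
case: (classic (x 0%N = 0)) => H0.
  by exists 0%N, (fun _ => 0); split => [k|]; [exists 0; rewrite scale0r | rewrite big_ord0].
have [a Ha] := Hx 0%N; have [b Hb] := Hx 1%N.
have Ha0 : a != 0 by apply/eqP => E; apply: H0; rewrite Ha E scale0r.
exists 1%N, (fun _ => (b / a)%:A); split; first by move=> k; exists (b / a).
rewrite big_ord1 Ha Hb mulr_algl scalerA mulfVK //.
Qed.

Fixpoint Pl (gs : seq A) : A -> Prop :=
  if gs is g :: gs' then adj (Pl gs') g else Kline.

Lemma Pl_subalg gs : is_subalgebra (Pl gs).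
Proof. by elim: gs => [|g gs IH] /=; [apply: Kline_subalg | apply: adj_subalg]. Qed.

Lemma Pl_noeth gs : noeth (Pl gs).
Proof. by elim: gs => [|g gs IH] /=; [apply: Kline_noeth | exact: (adj_noeth (Pl_subalg gs) IH)]. Qed.

Lemma Pl_gen gs : forall g, g \in gs -> Pl gs g.
Proof.
elim: gs => [|g gs IH] x; first by rewrite in_nil.
rewrite /= inE => /orP [/eqP ->|Hx]; first by apply: adj_g; apply: Pl_subalg.
by apply: adj_P; [apply: Pl_subalg | apply: IH].
Qed.

Lemma Pl_sub gs (Q : A -> Prop) : is_subalgebra Q -> (forall g, g \in gs -> Q g) ->
  forall x, Pl gs x -> Q x.
Proof.
move=> HQ; elim: gs => [|g gs IH] HG x /=.
  by move=> [k ->]; rewrite -[k%:A]/(k *: 1); apply: subalgZ => //; apply: subalg1.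
apply: adj_sub => //.
  by apply: IH => y Hy; apply: HG; rewrite inE Hy orbT.
by apply: HG; rewrite inE eqxx.
Qed.

Lemma fg_noeth (H : A -> Prop) : is_subalgebra H -> fin_gen_subalg H ->
  forall x : nat -> A, (forall k, H (x k)) ->
  exists n (eta : nat -> A), (forall k, H (eta k)) /\ x n = \sum_(k < n) eta k * x k.
Proof.
move=> HH [gs [Hgs Heq]] x Hx.
have HPl : forall k, Pl gs (x k).
  move=> k; have := (Heq (x k)).1 (Hx k); apply; first by apply: Pl_subalg.
  by apply: Pl_gen.
have [n [eta [He Hn]]] := Pl_noeth HPl.
exists n, eta; split => // k; apply: (Pl_sub HH Hgs); apply: He.
Qed.

End Chain.

Section Main.
Variables (K : fieldType) (A B : comAlgType K).
Hypothesis charK : [pchar K] =i pred0.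
Variables (phi : {poly B} -> A) (psi : A -> {poly B}).
Hypotheses (phiD : forall p q, phi (p + q) = phi p + phi q)
  (phiM : forall p q, phi (p * q) = phi p * phi q) (phi1 : phi 1 = 1)
  (phiK : forall k : K, phi ((k%:A)%:P) = k%:A)
  (phipsi : cancel phi psi) (psiphi : cancel psi phi).

Lemma phi0 : phi 0 = 0.
Proof. by apply: (@addrI _ (phi 0)); rewrite -phiD !addr0. Qed.
Lemma phiN p : phi (- p) = - phi p.
Proof. by apply: (@addrI _ (phi p)); rewrite -phiD !subrr phi0. Qed.
Lemma phiZ k p : phi ((k%:A)%:P * p) = k *: phi p.
Proof. by rewrite phiM phiK mulr_algl. Qed.
Lemma psiD x y : psi (x + y) = psi x + psi y.
Proof. by apply: (can_inj phipsi); rewrite phiD !psiphi. Qed.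
Lemma psiM x y : psi (x * y) = psi x * psi y.
Proof. by apply: (can_inj phipsi); rewrite phiM !psiphi. Qed.
Lemma psiZ k x : psi (k *: x) = (k%:A)%:P * psi x.
Proof. by apply: (can_inj phipsi); rewrite phiZ !psiphi. Qed.
Lemma psi1 : psi 1 = 1.
Proof. by apply: (can_inj phipsi); rewrite phi1 psiphi. Qed.

Definition Hp p := HD_star (phi p).

Lemma Hp0 : Hp 0. Proof. by rewrite /Hp phi0; apply: subalg0; apply: HD_subalg. Qed.
Lemma Hp1 : Hp 1. Proof. by rewrite /Hp phi1; apply: subalg1; apply: HD_subalg. Qed.
Lemma HpD p q : Hp p -> Hp q -> Hp (p + q).
Proof. by rewrite /Hp phiD; apply: subalgD; apply: HD_subalg. Qed.
Lemma HpM p q : Hp p -> Hp q -> Hp (p * q).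
Proof. by rewrite /Hp phiM; apply: subalgM; apply: HD_subalg. Qed.
Lemma HpZ k p : Hp p -> Hp ((k%:A)%:P * p).
Proof. by rewrite /Hp phiZ; apply: subalgZ; apply: HD_subalg. Qed.
Lemma HpN p : Hp p -> Hp (- p).
Proof. by rewrite /Hp phiN; apply: subalgN; apply: HD_subalg. Qed.
Lemma HpB p q : Hp p -> Hp q -> Hp (p - q).
Proof. by move=> Hp Hq; apply: HpD => //; apply: HpN. Qed.
Lemma Hp_sum (I : Type) (r : seq I) (F : I -> {poly B}) :
  (forall i, Hp (F i)) -> Hp (\sum_(i <- r) F i).
Proof.
move=> HF; elim: r => [|a r IH]; first by rewrite big_nil; apply: Hp0.
by rewrite big_cons; apply: HpD.
Qed.
Lemma HpXn p n : Hp p -> Hp (p ^+ n).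
Proof.
by move=> Hq; elim: n => [|n IH]; [rewrite expr0; apply: Hp1 | rewrite exprS; apply: HpM].
Qed.

Lemma Hp_ker (E : {poly B} -> {poly B}) :
  (forall p q, E (p + q) = E p + E q) ->
  (forall p q, E (p * q) = p * E q + E p * q) ->
  (forall k : K, E ((k%:A)%:P) = 0) ->
  (forall p, exists n, iter n E p = 0) -> (exists s, E s = 1) ->
  forall p, E p = 0 -> Hp p.
Proof.
move=> ED EM EK EN [s Es] p Ep.
apply: (@HD_ker _ _ (fun x => phi (E (psi x)))); last by rewrite phipsi Ep phi0.
split; last by exists (phi s); rewrite /is_slice phipsi Es phi1.
split.
- split.
  + by move=> x y; rewrite psiD ED phiD.
  + by move=> k x; rewrite psiZ EM EK mul0r addr0 phiZ.
  + by move=> x y; rewrite psiM EM phiD !phiM !psiphi.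
- move=> x; have [n Hn] := EN (psi x); exists n.
  have -> : forall m, iter m (fun y => phi (E (psi y))) x = phi (iter m E (psi x)).
    by elim=> [|m IH] /=; [rewrite psiphi | rewrite IH phipsi].
  by rewrite Hn phi0.
Qed.

Lemma HpC b : Hp b%:P.
Proof.
apply: (@Hp_ker deriv).
- by move=> p q; rewrite derivD.
- by move=> p q; rewrite derivM addrC.
- by move=> k; rewrite derivC.
- by move=> p; exists (size p); rewrite -/(derivn _ p) derivn_poly0.
- by exists 'X; rewrite derivX.
- by rewrite derivC.
Qed.

Lemma Hp_auto (sg tau : {poly B} -> {poly B}) :
  (forall p q, sg (p + q) = sg p + sg q) ->
  (forall p q, sg (p * q) = sg p * sg q) -> sg 1 = 1 ->
  (forall k : K, sg ((k%:A)%:P) = (k%:A)%:P) ->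
  cancel sg tau -> cancel tau sg ->
  forall p, Hp p -> Hp (sg p).
Proof.
move=> sD sM s1 sK sT tS p Hq.
have := @HD_auto _ _ (fun x => phi (sg (psi x))) (fun x => phi (tau (psi x))).
move=> /(_ _ _ _ _ _ _ (phi p) Hq); rewrite phipsi; apply.
- by move=> x y; rewrite psiD sD phiD.
- by move=> x y; rewrite psiM sM phiM.
- by rewrite psi1 s1 phi1.
- by move=> k x; rewrite psiZ sM sK phiZ.
- by move=> x; rewrite phipsi sT psiphi.
- by move=> x; rewrite phipsi tS psiphi.
Qed.


Lemma natK_neq0 n : (0 < n)%N -> (n%:R : K) != 0.
Proof. by move=> Hn; rewrite ((pcharf0P K).1 charK) -lt0n. Qed.

Lemma HpZc (c : K) b j : c != 0 -> Hp ((c *: b)%:P * 'X^j) -> Hp (b%:P * 'X^j).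
Proof.
move=> Hc H; have := HpZ (c^-1) H.
by rewrite mulrA -polyCM mulr_algl scalerA mulVf // scale1r.
Qed.

Definition sc (u : B) (p : {poly B}) := p \Po (u%:P * 'X).

Lemma coef_sc u p j : (sc u p)`_j = p`_j * u ^+ j.
Proof.
rewrite /sc comp_polyE.
have -> : \sum_(i < size p) p`_i *: (u%:P * 'X) ^+ i = \poly_(i < size p) (p`_i * u ^+ i).
  rewrite poly_def; apply: eq_bigr => i _.
  by rewrite exprMn -rmorphXn /= mul_polyC scalerA.
rewrite coef_poly; case: ltnP => // H.
by rewrite (leq_sizeP _ _ (leqnn _) _ H) mul0r.
Qed.

Lemma sc_can u v : u * v = 1 -> cancel (sc u) (sc v).
Proof.
move=> Huv p; rewrite /sc -comp_polyA comp_polyM comp_polyC comp_polyX.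
by rewrite mulrA -polyCM Huv polyC1 mul1r comp_polyXr.
Qed.

Lemma Hp_sc (lam : K) p : lam != 0 -> Hp p -> Hp (sc lam%:A p).
Proof.
move=> Hl; apply: (@Hp_auto _ (sc (lam^-1)%:A)).
- by move=> x y; rewrite /sc comp_polyD.
- by move=> x y; rewrite /sc comp_polyM.
- by rewrite /sc -polyC1 comp_polyC.
- by move=> k; rewrite /sc comp_polyC.
- by apply: sc_can; rewrite mulr_algl scalerA mulfV // scale1r.
- by apply: sc_can; rewrite mulr_algl scalerA mulVf // scale1r.
Qed.

Lemma poly_expand n (p : {poly B}) : (size p <= n)%N -> p = \sum_(i < n) (p`_i)%:P * 'X^i.
Proof.
move=> Hs; transitivity (\sum_(i < n) p`_i *: 'X^i); last first.
  by apply: eq_bigr => i _; rewrite mul_polyC.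
rewrite -poly_def; apply/polyP => i; rewrite coef_poly; case: ltnP => // H.
by rewrite (leq_sizeP _ _ Hs); last by apply: leq_trans H.
Qed.

Lemma two_pow_neq i s : (i < s)%N -> ((2%:R : K) ^+ i - 2%:R ^+ s != 0).
Proof.
move=> Hi; rewrite -!natrX subr_eq0; apply/eqP => E.
have Hlt : (2 ^ i < 2 ^ s)%N by rewrite ltn_exp2l.
have := natK_neq0 (n := (2 ^ s - 2 ^ i)%N); rewrite subn_gt0 Hlt => /(_ isT).
by rewrite natrB ?E ?subrr ?eqxx // ltnW.
Qed.

Lemma Hp_hom_aux s : forall p : {poly B}, (size p <= s)%N -> Hp p -> forall j, Hp ((p`_j)%:P * 'X^j).
Proof.
elim: s => [|s IH] p Hs Hq j.
  by move: Hs; rewrite size_poly_leq0 => /eqP ->; rewrite coef0 mul0r; apply: Hp0.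
pose lam : K := 2%:R.
have Hl : lam != 0 by apply: natK_neq0.
pose q := sc lam%:A p - ((lam ^+ s)%:A)%:P * p.
have Hq' : Hp q by apply: HpB; [apply: Hp_sc | apply: HpZ].
have qj : forall i, q`_i = (lam ^+ i - lam ^+ s) *: p`_i.
  by move=> i; rewrite /q coefB coef_sc coefCM exprZn expr1n mulr_algr mulr_algl scalerBl.
have Hsq : (size q <= s)%N.
  apply/leq_sizeP => i Hi; rewrite qj; case: (ltngtP s i) Hi => // Hsi _.
    by rewrite (leq_sizeP _ _ Hs i Hsi) scaler0.
  by rewrite Hsi subrr scale0r.
have IHq := IH q Hsq Hq'.
have Hlow : forall i, (i < s)%N -> Hp ((p`_i)%:P * 'X^i).
  move=> i Hi; apply: (@HpZc (lam ^+ i - lam ^+ s)); first by apply: two_pow_neq.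
  by rewrite -qj; apply: IHq.
case: (ltngtP j s) => Hjs.
- by apply: Hlow.
- by rewrite (leq_sizeP _ _ Hs j Hjs) mul0r; apply: Hp0.
rewrite Hjs.
have := poly_expand Hs; rewrite big_ord_recr /= => Hpe.
have -> : (p`_s)%:P * 'X^s = p - \sum_(i < s) (p`_i)%:P * 'X^i.
  by rewrite {2}Hpe addrAC subrr add0r.
apply: HpB => //; apply: Hp_sum => i; apply: Hlow; apply: ltn_ord.
Qed.

Lemma Hp_hom (p : {poly B}) j : Hp p -> Hp ((p`_j)%:P * 'X^j).
Proof. by move=> Hq; apply: (@Hp_hom_aux (size p)). Qed.

Definition tr (p : {poly B}) := p \Po ('X + 1).
Definition trinv (p : {poly B}) := p \Po ('X - 1).

Lemma compXn (q : {poly B}) j : 'X^j \Po q = q ^+ j.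
Proof.
elim: j => [|j IH]; first by rewrite !expr0 -polyC1 comp_polyC.
by rewrite exprS comp_polyM comp_polyX IH -exprS.
Qed.

Lemma coefXadd1 j : (('X + 1 : {poly B}) ^+ j)`_0 = 1 /\ (('X + 1 : {poly B}) ^+ j)`_1 = j%:R.
Proof.
elim: j => [|j [IH0 IH1]]; first by rewrite expr0 !coef1.
rewrite exprSr mulrDr mulr1 !coefD !coefMX /= IH0 IH1 add0r; split => //.
by rewrite mulrS.
Qed.

Lemma Hp_shift b j : (0 < j)%N -> Hp (b%:P * 'X^j) -> Hp (b%:P * 'X).
Proof.
move=> Hj H.
have H1 : Hp (tr (b%:P * 'X^j)).
  apply: (@Hp_auto _ trinv) => //.
  - by move=> x y; rewrite /tr comp_polyD.
  - by move=> x y; rewrite /tr comp_polyM.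
  - by rewrite /tr -polyC1 comp_polyC.
  - by move=> k; rewrite /tr comp_polyC.
  - move=> p; rewrite /tr /trinv -comp_polyA comp_polyD comp_polyX -polyC1 comp_polyC.
    by rewrite polyC1 subrK comp_polyXr.
  - move=> p; rewrite /tr /trinv -comp_polyA comp_polyB comp_polyX -polyC1 comp_polyC.
    by rewrite polyC1 addrK comp_polyXr.
have := Hp_hom 1 H1; rewrite /tr comp_polyM comp_polyC compXn coefCM (coefXadd1 j).2 expr1.
rewrite mulr_natr -(scaler_nat (R := K)) => H2.
have := @HpZc (j%:R) b 1; rewrite expr1; apply => //; first by apply: natK_neq0.
Qed.

Lemma Hp_coef1 (p : {poly B}) j : Hp p -> (0 < j)%N -> Hp ((p`_j)%:P * 'X).
Proof. by move=> Hq Hj; apply: (Hp_shift Hj); apply: Hp_hom. Qed.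


Section Der.
Variable (dl : B -> B).
Hypothesis Hdl : is_LND dl.

Lemma dlD x y : dl (x + y) = dl x + dl y. Proof. by case: Hdl => [[]]. Qed.
Lemma dlZ (k : K) x : dl (k *: x) = k *: dl x. Proof. by case: Hdl => [[]]. Qed.
Lemma dlM x y : dl (x * y) = x * dl y + dl x * y. Proof. by case: Hdl => [[]]. Qed.
Lemma dlN_ x : exists n, iter n dl x = 0. Proof. by case: Hdl. Qed.
Lemma dl0 : dl 0 = 0.
Proof. by apply: (@addrI _ (dl 0)); rewrite -dlD !addr0. Qed.
Lemma dlN x : dl (- x) = - dl x.
Proof. by apply: (@addrI _ (dl x)); rewrite -dlD !subrr dl0. Qed.
Lemma dlB x y : dl (x - y) = dl x - dl y.
Proof. by rewrite dlD dlN. Qed.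
Lemma dlMn x m : dl (x *+ m) = dl x *+ m.
Proof. by elim: m => [|m IH]; rewrite ?mulr0n ?dl0 // !mulrS dlD IH. Qed.
Lemma dl1 : dl 1 = 0.
Proof.
have H := dlM 1 1; rewrite !mulr1 mul1r in H.
by apply: (@addrI _ (dl 1)); rewrite addr0 -H.
Qed.
Lemma dlK (k : K) : dl (k%:A) = 0.
Proof. by rewrite dlZ dl1 scaler0. Qed.
Lemma dl_sum (I : Type) (r : seq I) (F : I -> B) :
  dl (\sum_(i <- r) F i) = \sum_(i <- r) dl (F i).
Proof. by apply: (big_morph dl dlD dl0). Qed.

Lemma iter_dl0 k : iter k dl 0 = 0.
Proof. by elim: k => [|k IH] //=; rewrite IH dl0. Qed.
Lemma iter_dlB k x y : iter k dl (x - y) = iter k dl x - iter k dl y.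
Proof. by elim: k => [|k IH] //=; rewrite IH dlB. Qed.
Lemma iter_dlMn k x m : iter k dl (x *+ m) = iter k dl x *+ m.
Proof. by elim: k => [|k IH] //=; rewrite IH dlMn. Qed.

Definition dt (p : {poly B}) : {poly B} := map_poly dl p.
Lemma coef_dt p i : (dt p)`_i = dl p`_i.
Proof. by rewrite /dt coef_map_id0 // dl0. Qed.
Lemma dtD p q : dt (p + q) = dt p + dt q.
Proof. by apply/polyP => i; rewrite coefD !coef_dt coefD dlD. Qed.
Lemma dtM p q : dt (p * q) = p * dt q + dt p * q.
Proof.
apply/polyP => i; rewrite coefD coef_dt !coefM dl_sum -big_split /=.
by apply: eq_bigr => j _; rewrite dlM !coef_dt.
Qed.
Lemma dtK (k : K) : dt ((k%:A)%:P) = 0.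
Proof.
by apply/polyP => i; rewrite coef_dt coefC coef0; case: eqP => _; rewrite ?dlK ?dl0.
Qed.
Lemma dtX : dt 'X = 0.
Proof. by apply/polyP => i; rewrite coef_dt coefX coef0; case: eqP => _; rewrite ?dl1 ?dl0. Qed.

Variable n : nat.
Definition En (p : {poly B}) := deriv p - 'X^n * dt p.

Lemma EnD p q : En (p + q) = En p + En q.
Proof. by rewrite /En derivD dtD mulrDr opprD addrACA. Qed.
Lemma EnM p q : En (p * q) = p * En q + En p * q.
Proof.
rewrite /En derivM dtM.
set a := deriv p; set b := deriv q; set c := dt p; set d := dt q; set x := 'X^n.
ring.
Qed.
Lemma EnK (k : K) : En ((k%:A)%:P) = 0.
Proof. by rewrite /En derivC dtK mulr0 subrr. Qed.
Lemma EnX : En 'X = 1.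
Proof. by rewrite /En derivX dtX mulr0 subr0. Qed.

Definition good m (p : {poly B}) := forall j k, (m <= j + n.+1 * k)%N -> iter k dl p`_j = 0.

Lemma good_step m p : good m.+1 p -> good m (En p).
Proof.
move=> Hg j k Hjk.
rewrite /En coefB coef_deriv coefXnM coef_dt iter_dlB iter_dlMn.
rewrite (Hg j.+1 k); last by rewrite addSn ltnS.
rewrite mul0rn; case: ltnP => Hjn; first by rewrite iter_dl0 subrr.
rewrite -iterSr (Hg (j - n)%N k.+1) ?subrr //.
by rewrite mulnS; lia.
Qed.

Lemma good0 p : good 0 p -> p = 0.
Proof. by move=> Hg; apply/polyP => j; rewrite coef0; apply: (Hg j 0%N). Qed.

Lemma good_iter m p : good m p -> iter m En p = 0.
Proof.
elim: m p => [|m IH] p Hg; first by apply: good0.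
by rewrite iterSr; apply: IH; apply: good_step.
Qed.

Lemma good_ex p : exists m, good m p.
Proof.
have [Kb HK] : exists Kb, forall j, iter Kb dl p`_j = 0.
  suff : forall N, exists Kb, forall j, (j < N)%N -> iter Kb dl p`_j = 0.
    move=> /(_ (size p)) [Kb HK]; exists Kb => j; case: (ltnP j (size p)) => Hj.
      by apply: HK.
    by rewrite (leq_sizeP _ _ (leqnn _) _ Hj) iter_dl0.
  elim=> [|N [Kb HK]]; first by exists 0%N.
  have [m Hm] := dlN_ p`_N.
  exists (Kb + m)%N => j; rewrite ltnS leq_eqVlt => /orP [/eqP ->|Hj].
    by rewrite iterD Hm iter_dl0.
  by rewrite addnC iterD HK // iter_dl0.
exists (size p + n.+1 * Kb)%N => j k Hjk.
case: (ltnP j (size p)) => Hj; last by rewrite (leq_sizeP _ _ (leqnn _) _ Hj) iter_dl0.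
have Hk : (Kb <= k)%N.
  rewrite leqNgt; apply/negP => Hlt.
  have : (n.+1 * k <= n.+1 * Kb)%N by rewrite leq_mul2l ltnW.
  lia.
by rewrite -(subnK Hk) iterD HK iter_dl0.
Qed.

Lemma En_LND p : exists m, iter m En p = 0.
Proof. by have [m Hm] := good_ex p; exists m; apply: good_iter. Qed.

Lemma Hp_En p : En p = 0 -> Hp p.
Proof.
apply: Hp_ker.
- exact: EnD.
- exact: EnM.
- exact: EnK.
- exact: En_LND.
- by exists 'X; apply: EnX.
Qed.

End Der.

Lemma Hp_cX (dl : B -> B) (Hdl : is_LND dl) r c n :
  dl r = c -> dl c = 0 -> Hp (c%:P * 'X^(n.+1)).
Proof.
move=> Hr Hc.
pose w := (r *+ n.+1)%:P + c *: 'X^(n.+1).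
have Hw : En dl n w = 0.
  rewrite /En /w derivD derivC add0r derivZ derivXn /=.
  have -> : dt dl ((r *+ n.+1)%:P + c *: 'X^(n.+1)) = (c *+ n.+1)%:P.
    apply/polyP => i; rewrite (coef_dt Hdl) coefD coefZ coefXn !coefC.
    have [->|Hi] := eqVneq i 0%N; first by rewrite /= mulr0 addr0 (dlMn Hdl) Hr.
    rewrite add0r.
    case: (boolP (i == n.+1)) => Hi'; first by rewrite mulr1 Hc.
    by rewrite mulr0 (dl0 Hdl).
  by rewrite polyCMn -mul_polyC !mulrnAr [c%:P * _]mulrC subrr.
have := HpB (Hp_En Hdl Hw) (HpC (r *+ n.+1)).
by rewrite /w addrC addKr mul_polyC.
Qed.

End Main.

Lemma local_slice (K : fieldType) (B : comAlgType K) (dl : B -> B) :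
  is_LND dl -> forall m x, iter m dl x = 0 -> dl x <> 0 ->
  exists r, dl r <> 0 /\ dl (dl r) = 0.
Proof.
move=> Hdl; elim=> [|m IH] x Hm Hx.
  by exfalso; apply: Hx; rewrite /= in Hm; rewrite Hm (dl0 Hdl).
rewrite iterSr in Hm.
case: (eqVneq (dl (dl x)) 0) => [H|H]; first by exists x.
by apply: (IH (dl x)) => // E; rewrite E eqxx in H.
Qed.

Unset Implicit Arguments.

Theorem theorem1 (K : closedFieldType) (charK0 : [pchar K] =i pred0)
    (A B : comAlgType K)
    (* X is an irreducible affine variety, K[X] = A *)
    (A_fg : fin_gen_algebra A) (A_dom : is_domain A)
    (* Y is an affine variety, K[Y] = B *)
    (B_fg : fin_gen_algebra B) (B_red : is_reduced B)
    (* X ≅ Y × A^1, i.e. K[X] ≅ K[Y][t] *)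
    (phi : {poly B} -> A) (phi_iso : poly_alg_iso phi)
    (* Y admits a nonzero LND *)
    (hY : exists d : B -> B, is_LND d /\ exists b, d b <> 0)
    (hHD : exists a : A, ~ HD_star a) :
  ~ fin_gen_subalg (@HD_star K A).
Proof.
move=> Hfg.
case: phi_iso => phiD phiM phi1 phiK [psi phipsi psiphi].
case: hY => dl [Hdl [b0 Hb0]].
have [m Hm] := dlN_ Hdl b0.
have [r [Hr Hrr]] := local_slice Hdl Hm Hb0.
set c := dl r in Hr Hrr.
have Bdom : forall x y : B, x * y = 0 -> x = 0 \/ y = 0.
  move=> x y Hxy.
  have : phi x%:P * phi y%:P = 0 by rewrite -phiM -polyCM Hxy (phi0 phiD).
  move=> /A_dom [] H; [left|right]; apply/eqP; rewrite -polyC_eq0; apply/eqP;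
    by apply: (can_inj phipsi); rewrite H (phi0 phiD).
pose x k := phi (c%:P * 'X^(k.+1)).
have Hx : forall k, HD_star (x k).
  by move=> k; apply: (Hp_cX phiD phiM phi1 phiK phipsi psiphi Hdl k (erefl c) Hrr).
have [n [eta [Heta Hn]]] := fg_noeth (@HD_subalg K A) Hfg Hx.
have psi0 : psi 0 = 0 by apply: (can_inj phipsi); rewrite psiphi (phi0 phiD).
have psi_sum : forall (I : Type) (s : seq I) (F : I -> A),
    psi (\sum_(i <- s) F i) = \sum_(i <- s) psi (F i).
  by move=> I s F; apply: (big_morph psi (psiD phiD phipsi psiphi) psi0).
have Hn' := congr1 psi Hn.
rewrite psi_sum /x phipsi in Hn'.
have Hc := congr1 (fun p : {poly B} => p`_(n.+1)) Hn'.
rewrite /= coefCM coefXn eqxx mulr1 coef_sum in Hc.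
pose u := \sum_(k < n) (psi (eta k))`_(n - k)%N.
have Hcu : c = u * c.
  rewrite /u mulr_suml {1}Hc; apply: eq_bigr => k _.
  rewrite (psiM phiM phipsi psiphi) phipsi mulrA coefMXn.
  by rewrite ltnS ltnNge ltnW ?ltn_ord //= subSS coefMC.
have Hu : u = 1.
  have : c * (1 - u) = 0 by rewrite mulrBr mulr1 mulrC -Hcu subrr.
  case/Bdom => [H|H]; first by exfalso; apply: Hr.
  by apply/eqP; rewrite eq_sym -subr_eq0 H.
have HX : Hp phi 'X.
  have -> : ('X : {poly B}) = \sum_(k < n) ((psi (eta k))`_(n - k)%N)%:P * 'X.
    by rewrite -mulr_suml -rmorph_sum /= -/u Hu mul1r.
  apply: (Hp_sum phiD) => k.
  apply: (Hp_coef1 charK0 phiD phiM phi1 phiK phipsi psiphi).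
    by rewrite /Hp psiphi.
  by rewrite subn_gt0.
case: hHD => a Ha; apply: Ha.
rewrite -(psiphi a); rewrite (poly_expand (leqnn (size (psi a)))).
apply: (Hp_sum phiD) => i; apply: (HpM phiM).
  by apply: (HpC phiD phiM phi1 phiK phipsi psiphi).
by apply: (HpXn phiM phi1).
Qed.
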